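(* Let $d\in\mathbb{N}$. There exists a constant $\Lambda=\Lambda(d)>0$ such that the following holds. Let $\mu,\nu$ be Borel probability measures on $[0,1]^{d}$, let $n\in\mathbb{N}$, let $\mathcal{T}$ be a finite $\mu$-partition of $[0,1]^{d}$, let $c>1$, and let $$X\subseteq \tfrac{1}{cn}\mathbb{Z}^{d}\cap\bigcup\mathcal{T},\qquad Y\subseteq \tfrac{1}{n}\mathbb{Z}^{d}\cap[0,1]^{d}$$ be finite sets such that $$\mu(T)\geq \frac{1}{n^{d}}|X\cap T|\quad\text{for every }T\in\mathcal{T},$$ and $$\nu(E)\leq \frac{1}{n^{d}}\left|\left\{y\in Y\colon d_{\infty}(y,E)\leq \tfrac{1}{n}\right\}\right|\quad\text{for every $\nu$-measurable }E\subseteq[0,1]^{d},$$ where $d_{\infty}$ is the distance induced by $\|\cdot\|_{\infty}$. Let $f\colon[0,1]^{d}\to[0,1]^{d}$ be a Lipschitz mapping with $f_{\sharp}\mu=\nu$. Then there exists an injective mapping $g\colon X\to Y$ with $$\operatorname{Lip}(g)\leq \Lambda\max\{1,\operatorname{Lip}(f)\}\,c\left(n\cdot\max_{T\in\mathcal{T}}\operatorname{diam}T+1\right).$$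
   Context: Given a measure $\mu$ on $[0,1]^{d}$, a collection $\mathcal{T}$ of subsets of $[0,1]^{d}$ is a $\mu$-partition of $[0,1]^{d}$ if $\mu([0,1]^{d}\setminus\bigcup\mathcal{T})=0$ and $\mu(T\cap T')=0$ for all distinct $T,T'\in\mathcal{T}$. $f_\sharp\mu$ denotes the pushforward measure. Lipschitz constants and diameters are with respect to the Euclidean metric. *)

(* Defs.v *)
From HB Require Import structures.
From mathcomp Require Import all_boot all_order all_algebra.
From mathcomp Require Import finmap.
From mathcomp Require Import all_classical all_reals all_analysis.
Unset Printing Implicit Defensive.
Import Order.TTheory GRing.Theory Num.Theory numFieldNormedType.Exports.
Local Open Scope classical_set_scope.
Local Open Scope ring_scope.

Section Defs.
Variables (R : realType) (d : nat).
Local Notation V := 'rV[R]_d.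

Definition enorm (x : V) : R := Num.sqrt (\sum_(i < d) (x ord0 i) ^+ 2).

Definition dinf (x y : V) : R := \big[Num.max/0]_(i < d) `|x ord0 i - y ord0 i|.

(* d_oo distance from a point to a set (+oo for the empty set) *)
Definition dinf_set (x : V) (E : set V) : \bar R :=
  ereal_inf [set (dinf x e)%:E | e in E].

Definition cube : set V := [set x | forall i, 0 <= x ord0 i <= 1].

Definition lattice (h : R) : set V :=
  [set x | forall i, exists z : int, x ord0 i = z%:~R * h].

(* Euclidean diameter (0 for the empty set) *)
Definition diam (A : set V) : R :=
  sup [set enorm (p.1 - p.2) | p in [set p : V * V | A p.1 /\ A p.2]].

Definition lip (A : set V) (f : V -> V) : R :=
  sup [set enorm (f p.1 - f p.2) / enorm (p.1 - p.2)
      | p in [set p : V * V | A p.1 /\ A p.2 /\ p.1 <> p.2]].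

Definition is_lipschitz_on (A : set V) (f : V -> V) : Prop :=
  exists L : R, forall x y, A x -> A y -> enorm (f x - f y) <= L * enorm (x - y).

Definition borelV := g_sigma_algebraType (@open V).

End Defs.

Arguments enorm {R d}.
Arguments dinf {R d}.
Arguments dinf_set {R d}.
Arguments lattice {R d}.
Arguments diam {R d}.
Arguments lip {R d}.
Arguments is_lipschitz_on {R d}.

(* Main.v *)
Require Import Defs.
From HB Require Import structures.
From mathcomp Require Import all_boot all_order all_algebra.
From mathcomp Require Import finmap.
From mathcomp Require Import all_classical all_reals all_analysis.
Import Order.TTheory GRing.Theory Num.Theory numFieldNormedType.Exports.
From mathcomp Require Import zify ring lra.
Section Hall.
Variables (A B : finType) (b0 : B).

Lemma bigcupD (N : A -> {set B}) (S : {set A}) (C : {set B}) :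
  \bigcup_(a in S) (N a :\: C) = (\bigcup_(a in S) N a) :\: C.
Proof.
apply/setP => y; rewrite finset.inE; apply/bigcupP/andP.
  by case=> a aS; rewrite finset.inE => /andP[yC yN]; split=> //; apply/bigcupP; exists a.
by case=> yC /bigcupP[a aS yN]; exists a => //; rewrite finset.inE yC.
Qed.

Lemma hall (N : A -> {set B}) (X : {set A}) :
  (forall S : {set A}, S \subset X -> #|S| <= #|\bigcup_(a in S) N a|) ->
  exists h : A -> B, (forall a, a \in X -> h a \in N a) /\ {in X &, injective h}.
Proof.
have [n] := ubnP #|X|; elim: n X N => // n IH X N ltX hallX.
have [->|/set0Pn [x xX]] := eqVneq X finset.set0.
  by exists (fun _ => b0); split => a; rewrite finset.inE.
case: (boolP [exists S : {set A}, [&& S \subset X, S != finset.set0, S != X &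
           #|\bigcup_(a in S) N a| <= #|S|]]).
- case/existsP => S0 /and4P[S0X S0n0 S0nX tight].
  have S0p : S0 \proper X by rewrite finset.properEneq S0nX.
  have [g1 [g1N g1i]] : exists h : A -> B, (forall a, a \in S0 -> h a \in N a) /\ {in S0 &, injective h}.
    apply: (IH S0 N); first by have := proper_card S0p; lia.
    by move=> S SS0; apply: hallX; apply: fintype.subset_trans SS0 S0X.
  set NS0 := \bigcup_(a in S0) N a.
  have [g2 [g2N g2i]] : exists h : A -> B, (forall a, a \in X :\: S0 -> h a \in N a :\: NS0) /\
      {in X :\: S0 &, injective h}.
    apply: (IH (X :\: S0) (fun a => N a :\: NS0)).
      have : 0 < #|S0| by rewrite card_gt0.
      have := cardsD X S0; have := subset_leq_card (subsetIl X S0).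
      have -> : X :&: S0 = S0 by apply/finset.setIidPr.
      by lia.
    move=> S SX2; rewrite bigcupD.
    have dS : [disjoint S & S0].
      apply/pred0P => a /=; apply/negP => /andP[aS aS0].
      by have := fintype.subsetP SX2 a aS; rewrite finset.inE aS0.
    have hU : #|S :|: S0| <= #|\bigcup_(a in S :|: S0) N a|.
      apply: hallX.
      by rewrite finset.subUset S0X andbT; apply: fintype.subset_trans SX2 (subsetDl _ _).
    have eU : \bigcup_(a in S :|: S0) N a = (\bigcup_(a in S) N a) :|: NS0 by rewrite finset.bigcup_setU.
    rewrite eU in hU.
    have := cardsU S S0; rewrite (disjoint_setI0 dS) cards0.
    have := cardsD (\bigcup_(a in S) N a :|: NS0) NS0.
    have := subset_leq_card (subsetIr (\bigcup_(a in S) N a :|: NS0) NS0).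
    have -> : (\bigcup_(a in S) N a :|: NS0) :\: NS0 = (\bigcup_(a in S) N a) :\: NS0.
      by rewrite finset.setDUl finset.setDv finset.setU0.
    have tight2 : #|NS0| <= #|S0| by []. move=> h1 h2 h3; lia.
  exists (fun a => if a \in S0 then g1 a else g2 a); split.
    move=> a aX; case: ifP => aS0; first exact: g1N.
    by have := g2N a; rewrite !finset.inE aS0 aX /= => /(_ isT) /andP[].
  move=> a a' aX a'X /=.
  have mS0 u : u \in X -> u \notin S0 -> u \in X :\: S0 by move=> ? ?; rewrite finset.inE; apply/andP.
  have inNS0 u : u \in S0 -> g1 u \in NS0 by move=> uS; apply/bigcupP; exists u => //; exact: g1N.
  have notNS0 u : u \in X -> u \notin S0 -> g2 u \notin NS0.
    by move=> uX uS; have := g2N u (mS0 u uX uS); rewrite finset.inE => /andP[].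
  case: ifP => aS; case: ifP => a'S.
  + exact: g1i.
  + by move=> e; have := notNS0 a' a'X (negbT a'S); rewrite -e inNS0.
  + by move=> e; have := notNS0 a aX (negbT aS); rewrite e inNS0.
  + by apply: g2i; apply: mS0 => //; rewrite ?aS ?a'S.
- rewrite negb_exists => /forallP loose.
  have loose' (S : {set A}) : S \subset X -> S != finset.set0 -> S != X -> #|S| < #|\bigcup_(a in S) N a|.
    by move=> SX Sn0 SnX; have := loose S; rewrite SX Sn0 SnX /= ltnNge.
  have : 0 < #|N x|.
    have := hallX [set x]; rewrite finset.sub1set xX big_set1 cards1; exact.
  rewrite card_gt0 => /set0Pn [y yN].
  have [g2 [g2N g2i]] : exists h : A -> B, (forall a, a \in X :\ x -> h a \in N a :\ y) /\
      {in X :\ x &, injective h}.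
    apply: (IH (X :\ x) (fun a => N a :\ y)).
      by have := cardsD1 x X; rewrite xX; lia.
    move=> S SX2; rewrite bigcupD.
    have [->|Sn0] := eqVneq S finset.set0; first by rewrite cards0.
    have SX : S \subset X by apply: fintype.subset_trans SX2 (subsetDl _ _).
    have SnX : S != X.
      by apply/eqP => eSX; have := fintype.subsetP SX2 x; rewrite eSX xX !finset.inE eqxx => /(_ isT).
    have := loose' S SX Sn0 SnX.
    have := cardsD (\bigcup_(a in S) N a) [set y].
    have := subset_leq_card (subsetIr (\bigcup_(a in S) N a) [set y]); rewrite cards1.
    by lia.
  exists (fun a => if a == x then y else g2 a); split.
    move=> a aX; case: eqP => [->//|/eqP ax].
    by have := g2N a; rewrite !finset.inE ax aX => /(_ isT) /andP[].
  have mX u : u \in X -> u != x -> u \in X :\ x by move=> ? ?; rewrite !finset.inE; apply/andP.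
  have ny u : u \in X -> u != x -> g2 u != y.
    by move=> uX ux; have := g2N u (mX u uX ux); rewrite !finset.inE => /andP[].
  move=> a a' aX a'X /=.
  case: eqP => [->|/eqP ax]; case: eqP => [->//|/eqP a'x].
  + by move=> e; have := ny a' a'X a'x; rewrite -e eqxx.
  + by move=> e; have := ny a aX ax; rewrite e eqxx.
  + by apply: g2i; apply: mX.
Qed.
Definition NS (N : A -> {set B}) (S : {set A}) : {set B} := \bigcup_(a in S) N a.

Lemma mem_NS (N : A -> {set B}) (S : {set A}) a b : a \in S -> b \in N a -> b \in NS N S.
Proof. by move=> aS bN; apply/bigcupP; exists a. Qed.

Lemma hallNS (N : A -> {set B}) :
  (forall S : {set A}, #|S| <= #|NS N S|) ->
  exists h : A -> B, (forall a, h a \in N a) /\ injective h.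
Proof.
move=> hc; have [h [hN hi]] := @hall N [set: A] (fun S _ => hc S).
by exists h; split => [a|a a' e]; [apply: hN; rewrite finset.inE | apply: hi => //; rewrite finset.inE].
Qed.
End Hall.
Arguments NS {A B}.
Arguments hallNS {A B}.
Arguments mem_NS {A B}.

Lemma card_cover (A : finType) (I : eqType) (r : seq I) (G : I -> {set A}) (S : {set A}) :
  (forall a, a \in S -> exists2 i, i \in r & a \in G i) -> #|S| <= \sum_(i <- r) #|G i|.
Proof.
elim: r S => [|i r IH] S hS.
  rewrite big_nil leqn0 cards_eq0; apply/eqP/setP => a; rewrite finset.inE.
  by apply/negP => /hS [j].
rewrite big_cons -(cardsID (G i) S).
apply: leq_add; first by apply: subset_leq_card; apply: subsetIr.
apply: IH => a; rewrite finset.inE => /andP[aG aS]; have [j] := hS a aS.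
rewrite finset.inE => /orP[/eqP->|jr] aGj; first by rewrite aGj in aG.
by exists j.
Qed.


Local Open Scope classical_set_scope.
Local Open Scope ring_scope.

Lemma cardfs_sub (K : choiceType) (Z : {fset K}) (P : pred K) :
  #|` [fset x in Z | P x]%fset| = #|[set a : Z | P (val a)]%SET|.
Proof.
rewrite -(@card_fsub _ Z); last by apply/fsubsetP => x; rewrite !inE => /andP[].
by apply: eq_card => a; rewrite in_fsub !inE (fsvalP a).
Qed.

Lemma le_bigmax0 (R : realType) (I : eqType) (r : seq I) (F : I -> R) i :
  i \in r -> F i <= \big[Num.max/0]_(j <- r) F j.
Proof.
elim: r => // a r IH; rewrite inE big_cons => /orP[/eqP->|/IH h].
  by rewrite le_max lexx.
by rewrite le_max h orbT.
Qed.

Section S.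
Variables (R : realType) (d : nat).
Local Notation V := 'rV[R]_d.

Lemma enorm_ge0 (v : V) : 0 <= enorm v.
Proof. exact: sqrtr_ge0. Qed.

Lemma coord_le_enorm (v : V) i : `|v ord0 i| <= enorm v.
Proof.
rewrite /enorm -sqrtr_sqr ler_sqrt; last by apply: sumr_ge0 => j _; exact: sqr_ge0.
rewrite (bigD1 i) //= lerDl; apply: sumr_ge0 => j _; exact: sqr_ge0.
Qed.

Lemma enorm_le (v : V) (m : R) : 0 <= m -> (forall i, `|v ord0 i| <= m) -> enorm v <= d%:R * m.
Proof.
move=> m0 hv; rewrite /enorm.
have dm0 : 0 <= d%:R * m by apply: mulr_ge0.
rewrite -(ger0_norm dm0) -sqrtr_sqr ler_sqrt; last exact: sqr_ge0.
apply: (@le_trans _ _ (\sum_(i < d) m ^+ 2)).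
  apply: ler_sum => i _; rewrite -real_normK ?num_real //.
  by apply: lerXn2r; rewrite ?nnegrE ?normr_ge0.
rewrite sumr_const card_ord exprMn.
have -> : m ^+ 2 *+ d = d%:R * m ^+ 2 by rewrite mulr_natl.
apply: ler_wpM2r; first exact: sqr_ge0.
case: d => [|k]; first by rewrite expr2 mul0r.
by rewrite -natrX ler_nat expnS leq_pmulr // expn_gt0.
Qed.

Lemma enorm_gt0 (v : V) : v != 0 -> 0 < enorm v.
Proof.
move=> vn0; have [i vi] : exists i, v ord0 i != 0.
  apply/existsP; apply: contraR vn0; rewrite negb_exists => /forallP h.
  apply/eqP/rowP => i; rewrite mxE; apply/eqP; have := h i; by rewrite negbK.
by apply: lt_le_trans (coord_le_enorm v i); rewrite normr_gt0.
Qed.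

Lemma dinf_coord (x y : V) i : `|x ord0 i - y ord0 i| <= dinf x y.
Proof. by rewrite /dinf; apply: (@le_bigmax0 R _ _ (fun j : 'I_d => `|x ord0 j - y ord0 j|)); rewrite mem_index_enum. Qed.
Lemma lattice_sep (h : R) (x y : V) : 0 < h -> lattice h x -> lattice h y -> x != y ->
  h <= enorm (x - y).
Proof.
move=> h0 hx hy xy; have [i vi] : exists i, x ord0 i != y ord0 i.
  apply/existsP; apply: contraR xy; rewrite negb_exists => /forallP hh.
  apply/eqP/rowP => i; have := hh i; by rewrite negbK => /eqP.
apply: le_trans (coord_le_enorm _ i); rewrite !mxE.
have [z1 e1] := hx i; have [z2 e2] := hy i.
rewrite e1 e2 -mulrBl normrM (gtr0_norm h0) ler_pMl // -intrB.
apply: norm_intr_ge1; first exact: intr_int.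
apply: contra vi => /eqP hz; rewrite e1 e2; apply/eqP; congr (_ * _); apply/eqP; by rewrite -subr_eq0 -intrB hz.
Qed.

Lemma sup_ge0' (E : set R) : (forall x, E x -> 0 <= x) -> 0 <= sup E.
Proof.
move=> h; case: (pselect (has_sup E)) => [[[x Ex] ub]|nh]; last by rewrite sup_out.
by apply: le_trans (h x Ex) _; apply: ub_le_sup.
Qed.

Lemma sup_le' (E : set R) (M : R) : 0 <= M -> (forall x, E x -> x <= M) -> sup E <= M.
Proof.
move=> M0 h; case: (pselect (E !=set0)) => [ne|e]; first by apply: ge_sup.
have -> : E = set0 by apply/seteqP; split => x // Ex; apply: e; exists x.
by rewrite sup0.
Qed.

Lemma le_sup' (E : set R) (M x : R) : (forall y, E y -> y <= M) -> E x -> x <= sup E.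
Proof. by move=> h Ex; apply: ub_le_sup => //; exists M. Qed.

Lemma enorm0 : enorm (0 : V) = 0.
Proof. by rewrite /enorm big1 ?sqrtr0 // => i _; rewrite mxE expr0n. Qed.

Lemma lip_le (A : set V) f x y : is_lipschitz_on A f -> A x -> A y ->
  enorm (f x - f y) <= lip A f * enorm (x - y).
Proof.
move=> [L0 hL] Ax Ay; have [<-|xy] := eqVneq x y; first by rewrite !subrr enorm0 mulr0.
have p0 : 0 < enorm (x - y) by apply: enorm_gt0; rewrite subr_eq0.
rewrite -ler_pdivrMr //; apply: (@le_sup' _ L0).
  move=> r [p [A1 [A2 pn12]] <-]; have [e0|pn] := eqVneq (enorm (p.1 - p.2)) 0.
    by have := enorm_gt0 (p.1 - p.2); rewrite e0 ltxx subr_eq0 => /(_ (introN eqP pn12)).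
  by rewrite ler_pdivrMr ?hL // lt_neqAle eq_sym pn enorm_ge0.
by exists (x, y) => //; split => //; split => //; apply/eqP.
Qed.

Lemma lip_ge0 (A : set V) f : 0 <= lip A f.
Proof.
by apply: sup_ge0' => r [p _ <-]; apply: divr_ge0; apply: enorm_ge0.
Qed.

Lemma cube_diff x y : cube R d x -> cube R d y -> enorm (x - y) <= d%:R.
Proof.
move=> cx cy; rewrite -[d%:R]mulr1; apply: enorm_le => // i.
rewrite !mxE; have /andP[? ?] := cx i; have /andP[? ?] := cy i.
by rewrite ler_norml; apply/andP; split; lra.
Qed.

Lemma diam_le (A : set V) x y : A `<=` cube R d -> A x -> A y -> enorm (x - y) <= diam A.
Proof.
move=> Ac Ax Ay; apply: (@le_sup' _ d%:R); last by exists (x, y).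
by move=> r [p [A1 A2] <-]; apply: cube_diff; apply: Ac.
Qed.

Lemma diam_ge0 (A : set V) : 0 <= diam A.
Proof. by apply: sup_ge0' => r [p _ <-]; apply: enorm_ge0. Qed.

Lemma diam_led (A : set V) : A `<=` cube R d -> diam A <= d%:R.
Proof.
move=> Ac; apply: sup_le' => // r [p [A1 A2] <-]; apply: cube_diff; exact: Ac.
Qed.
End S.

Lemma bigU_mem (T : Type) (I : eqType) (r : seq I) (P : pred I) (F : I -> set T) z :
  (\big[setU/set0]_(i <- r | P i) F i) z <-> exists i, [/\ i \in r, P i & F i z].
Proof.
elim: r => [|a r IH]; first by rewrite big_nil; split => // -[i []].
rewrite big_cons; case: ifP => Pa.
  split.
    case=> [Fz|/IH [i [ir Pi Fi]]]; first by exists a; split => //; rewrite inE eqxx.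
    by exists i; split => //; rewrite inE ir orbT.
  case=> i []; rewrite inE => /orP[/eqP ->|ir] Pi Fi; first by left.
  by right; apply/IH; exists i.
split; first by case/IH => i [ir Pi Fi]; exists i; split => //; rewrite inE ir orbT.
case=> i []; rewrite inE => /orP[/eqP ai|ir] Pi Fi; first by rewrite -ai Pi in Pa.
by apply/IH; exists i.
Qed.

Section M.
Context d0 (T : measurableType d0) (R : realType).
Variable mu : {measure set T -> \bar R}.

Lemma meas_bigU (I : Type) (r : seq I) (P : pred I) (F : I -> set T) :
  (forall i, measurable (F i)) -> measurable (\big[setU/set0]_(i <- r | P i) F i).
Proof.
move=> mF; apply: big_ind => //; by move=> A B mA mB; apply: measurableU.
Qed.

Lemma meas_bigI (I : Type) (r : seq I) (P : pred I) (F : I -> set T) :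
  (forall i, measurable (F i)) -> measurable (\big[setI/setT]_(i <- r | P i) F i).
Proof.
move=> mF; apply: big_ind => //; by move=> A B mA mB; apply: measurableI.

Qed.

Lemma meas_bigU_seq (I : eqType) (r : seq I) (P : pred I) (F : I -> set T) :
  (forall i, i \in r -> P i -> measurable (F i)) -> measurable (\big[setU/set0]_(i <- r | P i) F i).
Proof.
move=> mF; rewrite big_seq_cond; apply: big_ind => //.
- by move=> A B mA mB; apply: measurableU.
- by move=> i /andP[]; apply: mF.
Qed.

Lemma null_bigU (I : Type) (r : seq I) (P : pred I) (F : I -> set T) :
  (forall i, P i -> measurable (F i) /\ mu (F i) = 0%E) ->
  mu (\big[setU/set0]_(i <- r | P i) F i) = 0%E.
Proof.
move=> hF.
suff : measurable (\big[setU/set0]_(i <- r | P i) F i) /\ mu (\big[setU/set0]_(i <- r | P i) F i) = 0%E by case.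
apply: (big_ind (fun A => measurable A /\ mu A = 0%E)).
- by split; [exact: measurable0|exact: measure0].
- move=> A B [mA A0] [mB B0]; split; first exact: measurableU.
  exact: null_set_setU.
- exact: hF.
Qed.

Lemma sum_le_union (F : {fset set T}) :
  (forall A, A \in F -> measurable A) ->
  (forall A B, A \in F -> B \in F -> A <> B -> mu (A `&` B) = 0%E) ->
  (\sum_(A <- F) mu A <= mu (\big[setU/set0]_(A <- F) A))%E.
Proof.
move=> mF nF.
pose e' A := A `\` \big[setU/set0]_(B <- F | B != A) B.
pose mF' A := if A \in F then A else set0.
have mF'm A : measurable (mF' A) by rewrite /mF'; case: ifP => // /mF.
apply: (@le_trans _ _ (\sum_(A <- F) mu (e' A))).
  rewrite big_seq [X in (_ <= X)%E]big_seq; apply: lee_sum => A AF; rewrite /e'.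
  pose Z := \big[setU/set0]_(B <- F | B != A) (A `&` mF' B).
  have Zn : mu Z = 0%E.
    apply: null_bigU => B BA; rewrite /mF'; case: ifP => BF.
      split; first by apply: measurableI; apply: mF.
      apply: nF => //; apply/eqP; by rewrite eq_sym.
    by rewrite setI0; split; [exact: measurable0|exact: measure0].
  have mU : measurable (\big[setU/set0]_(B <- F | B != A) B).
    have -> : \big[setU/set0]_(B <- F | B != A) B = \big[setU/set0]_(B <- F | B != A) mF' B.
      by rewrite big_seq_cond [RHS]big_seq_cond; apply: eq_bigr => B /andP[BF _]; rewrite /mF' BF.
    exact: meas_bigU.
  have mZ : measurable Z by apply: meas_bigU => B; apply: measurableI; [exact: mF|].
  have mAU : measurable (A `\` \big[setU/set0]_(B <- F | B != A) B).
    by apply: measurableD => //; exact: mF.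
  rewrite -(measureU0 (mu:=mu) mAU mZ Zn).
  apply: le_measure; rewrite ?inE.
  - exact: mF.
  - by apply: measurableU => //; apply: measurableD => //; exact: mF.
  move=> z Az; case: (pselect ((\big[setU/set0]_(B <- F | B != A) B) z)) => hz.
    right; move/bigU_mem: hz => [B [BF BA Bz]]; apply/bigU_mem; exists B; split => //.
    by split => //; rewrite /mF' BF.
  by left.
have mU' B : B \in F -> measurable (e' B).
  move=> BF; apply: measurableD; first exact: mF.
  by apply: meas_bigU_seq => C CF _; apply: mF.
rewrite -measure_fbigsetU //.
- apply: le_measure; rewrite ?inE.
  + by apply: meas_bigU_seq => A AF _; apply: mU'.
  + by apply: meas_bigU_seq => A AF _; apply: mF.
  + move=> z /bigU_mem [A [AF _ [Az _]]]; apply/bigU_mem; exists A; split => //.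
- move=> A B AF BF [z [[zA zA'] [zB zB']]]; apply/eqP/negPn/negP => AB.
  apply: zA'; apply/bigU_mem; exists B; split => //; by rewrite eq_sym.
Qed.
End M.

Section S2.
Variables (R : realType) (d : nat).
Local Notation V := 'rV[R]_d.

Lemma open_meas (A : set V) : open A -> @measurable _ (borelV R d) A.
Proof. by move=> oA; apply: sub_sigma_algebra. Qed.

Lemma meas_coord_le (i : 'I_d) (b : R) :
  @measurable _ (borelV R d) [set z : V | z ord0 i <= b].
Proof.
have -> : [set z : V | z ord0 i <= b] = ~` [set z : V | b < z ord0 i].
  by apply/seteqP; split => z /=; rewrite real_ltNge ?num_real //= ?negbK; [move=> ->|move/negP/negbNE].
apply: measurableC; apply: open_meas.
apply: (@open_comp _ _ (fun z : V => z ord0 i) [set x : R | b < x]).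
  by move=> z _; apply: coord_continuous.
exact: open_gt.
Qed.
Lemma meas_coord_ge (i : 'I_d) (b : R) :
  @measurable _ (borelV R d) [set z : V | b <= z ord0 i].
Proof.
have -> : [set z : V | b <= z ord0 i] = ~` [set z : V | z ord0 i < b].
  by apply/seteqP; split => z /=; rewrite real_ltNge ?num_real //= ?negbK; [move=> ->|move/negP/negbNE].
apply: measurableC; apply: open_meas.
apply: (@open_comp _ _ (fun z : V => z ord0 i) [set x : R | x < b]).
  by move=> z _; apply: coord_continuous.
exact: open_lt.
Qed.
End S2.

Section X2. Variable R : realType. Variable d : nat.
Lemma ballV (w z : 'rV[R]_d) e : ball w e z -> forall i, `|w ord0 i - z ord0 i| < e.
Proof.
rewrite mx_norm_ball /ball_ => h i. 
apply: le_lt_trans h.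
change (`|w ord0 i - z ord0 i| <= mx_norm (w - z)).
rewrite mx_normrE.
have := @le_bigmax0 R _ _ (fun ij => `|(w - z) ij.1 ij.2|) (ord0, i).
move=> h; have := h _ (mem_index_enum (ord0, i)); by rewrite !mxE.
Qed.
End X2.

Lemma bigI_mem (T : Type) (I : eqType) (r : seq I) (P : pred I) (F : I -> set T) z :
  (\big[setI/setT]_(i <- r | P i) F i) z <-> (forall i, i \in r -> P i -> F i z).
Proof.
elim: r => [|a r IH]; first by rewrite big_nil.
rewrite big_cons; case: ifP => Pa.
  split.
    case=> Fz /IH h i; rewrite inE => /orP[/eqP->//|ir]; exact: h.
  move=> h; split; first by apply: h; rewrite ?inE ?eqxx.
  by apply/IH => i ir; apply: h; rewrite inE ir orbT.
split.
  move=> /IH h i; rewrite inE => /orP[/eqP->|ir]; first by rewrite Pa.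
  exact: h.
by move=> h; apply/IH => i ir; apply: h; rewrite inE ir orbT.
Qed.

Section S3.
Variables (R : realType) (d : nat).
Local Notation V := 'rV[R]_d.

Lemma meas_cube : @measurable _ (borelV R d) (cube R d).
Proof.
have -> : cube R d = \big[setI/setT]_(i <- enum 'I_d)
    ([set z : V | z ord0 i <= 1] `&` [set z : V | 0 <= z ord0 i]).
  apply/seteqP; split => z.
    by move=> cz; apply/bigI_mem => i _ _; have /andP[? ?] := cz i.
  by move/bigI_mem => h i; have [? ?] := h i (mem_enum _ i) isT; apply/andP.
apply: meas_bigI => i; apply: measurableI; [exact: meas_coord_le|exact: meas_coord_ge].
Qed.

Lemma meas_lip_level (phi : V -> R) (K c rho : R) : 0 <= K ->
  (forall z w, cube R d z -> cube R d w -> `|phi z - phi w| <= K * enorm (z - w)) ->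
  @measurable _ (borelV R d) (cube R d `&` [set z | `|phi z - c| <= rho]).
Proof.
move=> K0 hphi.
set G := cube R d `&` [set z | `|phi z - c| <= rho].
pose eps (m : nat) : R := ((m.+1)%:R * (K * d%:R + 1))^-1.
have eps0 m : 0 < eps m.
  by rewrite invr_gt0 mulr_gt0 // ltr_wpDl // mulr_ge0.
have -> : G = cube R d `&` \bigcap_m (\bigcup_(w in G) ball w (eps m)).
  apply/seteqP; split => z.
    move=> [cz hz]; split => // m _; exists z => //; exact: ballxx.
  move=> [cz hU]; split => //=; rewrite leNgt; apply/negP => hgt.
  have [k hk] := ltr_add_invr hgt.
  have [w [cw hw] bwz] := hU k I.
  have hb := @ballV R d _ _ _ bwz.
  have ezw : enorm (z - w) <= d%:R * eps k.
    apply: enorm_le; first exact: ltW.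
    by move=> i; rewrite !mxE distrC; apply: ltW.
  have : `|phi z - c| <= rho + K * (d%:R * eps k).
    apply: (le_trans (_ : _ <= `|phi w - c| + `|phi z - phi w|)).
      have -> : phi z - c = (phi w - c) + (phi z - phi w) by ring.
      exact: ler_normD.
    apply: lerD => //; apply: le_trans (hphi z w cz cw) _.
    exact: (ler_wpM2l K0 ezw).
  have : K * (d%:R * eps k) <= (k.+1)%:R^-1.
    have hKd : K * d%:R / (K * d%:R + 1) <= 1.
      by rewrite ler_pdivrMr ?mul1r ?lerDl // ltr_wpDl // mulr_ge0.
    have -> : K * (d%:R * eps k) = (k.+1)%:R^-1 * (K * d%:R / (K * d%:R + 1)).
      by rewrite /eps invfM; ring.
    by apply: ler_piMr => //; rewrite invr_ge0.
  move=> h1 h2; have := le_lt_trans (le_trans h2 (lerD (lexx rho) h1)) hk.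
  by rewrite ltxx.
apply: measurableI; first exact: meas_cube.
apply: bigcapT_measurable => m; apply: open_meas.
by apply: bigcup_open => w _; exact: ball_open.
Qed.
End S3.

Theorem lemma1 (R : realType) (d : nat) :
  exists Lambda : R, 0 < Lambda /\
  forall (mu nu : probability (borelV R d) R) (n : nat)
         (Tc : set (set 'rV[R]_d)) (c : R) (X Y : {fset 'rV[R]_d})
         (f : 'rV[R]_d -> 'rV[R]_d),
    (0 < n)%N ->
    (* mu, nu are probability measures on [0,1]^d *)
    mu (cube R d) = 1%E -> nu (cube R d) = 1%E ->
    (* Tc is a finite mu-partition of [0,1]^d *)
    finite_set Tc ->
    (forall T, Tc T -> @measurable _ (borelV R d) T /\ T `<=` cube R d) ->
    mu (cube R d `\` \bigcup_(T in Tc) T) = 0%E ->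
    (forall T T', Tc T -> Tc T' -> T <> T' -> mu (T `&` T') = 0%E) ->
    1 < c ->
    (forall x, x \in X -> lattice (c * n%:R)^-1 x /\ exists2 T, Tc T & T x) ->
    (forall y, y \in Y -> lattice (n%:R)^-1 y /\ cube R d y) ->
    (forall T, Tc T ->
       (((n%:R ^+ d)^-1 * (#|` [fset x in X | x \in T]|)%fset%:R)%:E <= mu T)%E) ->
    (forall E, @measurable _ (borelV R d) E -> E `<=` cube R d ->
       (nu E <= ((n%:R ^+ d)^-1 *
          (#|` [fset y in Y | (dinf_set y E <= (n%:R^-1)%:E)%E]|)%fset%:R)%:E)%E) ->
    (* f : [0,1]^d -> [0,1]^d Lipschitz with f_# mu = nu *)
    (forall x, cube R d x -> cube R d (f x)) ->
    is_lipschitz_on (cube R d) f ->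
    (forall B, @measurable _ (borelV R d) B ->
       nu B = mu (cube R d `&` f @^-1` B)) ->
    exists g : 'rV[R]_d -> 'rV[R]_d,
      (forall x, x \in X -> g x \in Y) /\
      {in X &, injective g} /\
      lip [set x | x \in X] g <=
        Lambda * Num.max 1 (lip (cube R d) f) * c *
        (n%:R * sup [set diam T | T in Tc] + 1).
Proof.
exists (d%:R * (4 * d%:R + 1) + 1); split.
  by rewrite ltr_wpDl // mulr_ge0 // addr_ge0 // mulr_ge0.
move=> mu nu n Tc c X Y f n0 mucube nucube Tcfin TcP munull mudisj c1 XP YP muT nuE
  fcube flip push.
case/finite_fsetP: Tcfin => Tf eTc; subst Tc.
set L := lip (cube R d) f.
set Dm := sup [set diam T | T in [set` Tf]].
have L0 : 0 <= L by apply: lip_ge0.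
have Dm0 : 0 <= Dm by apply: sup_ge0' => r [T _ <-]; apply: diam_ge0.
have diamDm T : T \in Tf -> diam T <= Dm.
  move=> TT; apply: (@le_sup' _ _ d%:R); last by exists T.
  by move=> r [T' T'T <-]; apply: diam_led; have [] := TcP T' T'T.
set nr : R := n%:R.
have nr0 : 0 < nr by rewrite ltr0n.
set rho := L * Dm.
have rho0 : 0 <= rho by apply: mulr_ge0.
set r := d%:R * (rho + 2 / nr).
have r0 : 0 <= r by apply: mulr_ge0 => //; apply: addr_ge0 => //; apply: divr_ge0 => //; apply: ltW.
have Tcube T z : T \in Tf -> T z -> cube R d z.
  by move=> TT Tz; have [_ /(_ z Tz)] := TcP T TT.
have Xcube x : x \in X -> cube R d x.
  by move=> xX; have [_ [T TT Tx]] := XP x xX; apply: (Tcube T).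
pose N (a : X) : {set Y} := [set b : Y | enorm (val b - f (val a)) <= r]%SET.
have HC : forall S : {set X}, (#|S| <= #|NS N S|)%N.
  move=> S.
  pose F : {fset set 'rV[R]_d} := [fset T in Tf | `[< exists2 a, a \in S & T (val a) >]]%fset.
  have FT T : T \in F -> T \in Tf /\ exists2 a, a \in S & T (val a).
    by rewrite !inE => /andP[TT /asboolP].
  pose box (cc : 'rV[R]_d) : set 'rV[R]_d :=
    \big[setI/setT]_(i <- enum 'I_d) [set w : 'rV[R]_d | `|w ord0 i - cc ord0 i| <= rho].
  pose E : set 'rV[R]_d := cube R d `&` \big[setU/set0]_(a <- enum S) box (f (val a)).
  have mE : @measurable _ (borelV R d) E.
    apply: measurableI; first exact: meas_cube.
    apply: meas_bigU => a; apply: meas_bigI => i.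
    have -> : [set w : 'rV[R]_d | `|w ord0 i - f (val a) ord0 i| <= rho] =
        [set w | w ord0 i <= f (val a) ord0 i + rho] `&` [set w | f (val a) ord0 i - rho <= w ord0 i].
      apply/seteqP; split => w /=; first by rewrite ler_distl => /andP[? ?].
      by move=> [? ?]; rewrite ler_distl; apply/andP.
    by apply: measurableI; [exact: meas_coord_le|exact: meas_coord_ge].
  have mG : @measurable _ (borelV R d) (cube R d `&` f @^-1` E).
    have -> : cube R d `&` f @^-1` E = \big[setU/set0]_(a <- enum S) (cube R d `&`
        \big[setI/setT]_(i <- enum 'I_d) (cube R d `&` [set z | `|f z ord0 i - f (val a) ord0 i| <= rho])).
      apply/seteqP; split => z.
        move=> [cz [_ /bigU_mem [a [aS _ /bigI_mem hb]]]]; apply/bigU_mem; exists a; split => //.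
        by split => //; apply/bigI_mem => i iI _; split => //; apply: hb.
      move/bigU_mem => [a [aS _ [cz /bigI_mem hb]]]; split => //; split; first exact: fcube.
      apply/bigU_mem; exists a; split => //; apply/bigI_mem => i iI _.
      by have [] := hb i iI isT.
    apply: meas_bigU => a; apply: measurableI; first exact: meas_cube.
    apply: meas_bigI => i.
    apply: (@meas_lip_level R d (fun z => f z ord0 i) L) => // z w cz cw.
    have := le_trans (@coord_le_enorm R d (f z - f w) i) (@lip_le R d _ _ _ _ flip cz cw).
    by rewrite !mxE.
  have C1 : (#|S| <= \sum_(T <- F) #|` [fset x in X | x \in T]%fset|)%N.
    apply: (@leq_trans (\sum_(T <- F) #|[set a : X | val a \in T]%SET|)).
      apply: card_cover => a aS.
      have [_ [T TT Ta]] := XP (val a) (fsvalP a).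
      exists T; last by rewrite inE; apply/mem_set.
      by rewrite !inE TT /=; apply/asboolP; exists a.
    by rewrite leq_eqVlt; apply/orP; left; apply/eqP; apply: eq_bigr => T _; rewrite cardfs_sub.
  have C2 : (((nr ^+ d)^-1 * (#|S|)%:R)%:E <= \sum_(T <- F) mu T)%E.
    apply: (@le_trans _ _ (((nr ^+ d)^-1 * (\sum_(T <- F) #|` [fset x in X | x \in T]%fset|)%:R)%:E)).
      rewrite lee_fin; apply: ler_wpM2l; first by rewrite invr_ge0 exprn_ge0 // ltW.
      by rewrite ler_nat.
    rewrite natr_sum mulr_sumr -sumEFin.
    rewrite big_seq [X in (_ <= X)%E]big_seq; apply: lee_sum => T TF.
    have [TT _] := FT T TF; exact: muT.
  have C3 : (\sum_(T <- F) mu T <= mu (\big[setU/set0]_(T <- F) T))%E.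
    apply: (@sum_le_union _ _ R mu F).
      by move=> A AF; have [AT _] := FT A AF; have [] := TcP A AT.
    move=> A B AF BF AB; have [AT _] := FT A AF; have [BT _] := FT B BF.
    exact: mudisj.
  have C4 : (mu (\big[setU/set0]_(T <- F) T) <= mu (cube R d `&` f @^-1` E))%E.
    apply: le_measure; rewrite ?inE => //.
      by apply: meas_bigU_seq => A AF _; have [AT _] := FT A AF; have [] := TcP A AT.
    move=> z /bigU_mem [T [TF _ Tz]]; have [TT [a aS Ta]] := FT T TF.
    have cz := Tcube T z TT Tz; have ca := Tcube T _ TT Ta.
    split => //; split; first exact: fcube.
    apply/bigU_mem; exists a; split => //; first by rewrite mem_enum.
    apply/bigI_mem => i _ _ /=.
    have := le_trans (@coord_le_enorm R d (f z - f (val a)) i) (@lip_le R d _ _ _ _ flip cz ca).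
    rewrite !mxE => h1; apply: le_trans h1 _.
    apply: ler_wpM2l => //; apply: le_trans (diamDm T TT).
    by apply: diam_le => //; have [] := TcP T TT.
  have C5 : (mu (cube R d `&` f @^-1` E) <=
      ((nr ^+ d)^-1 * (#|` [fset y in Y | (dinf_set y E <= (nr^-1)%:E)%E]%fset|)%:R)%:E)%E.
    by rewrite -push //; apply: nuE => //; apply: subIsetl.
  have C6 : (#|` [fset y in Y | (dinf_set y E <= (nr^-1)%:E)%E]%fset| <= #|NS N S|)%N.
    rewrite cardfs_sub; apply: subset_leq_card; apply/fintype.subsetP => b; rewrite inE => hb.
    have : (dinf_set (val b) E < (2 / nr)%:E)%E.
      apply: le_lt_trans hb _; rewrite lte_fin -[X in X < _]mul1r ltr_pM2r ?invr_gt0 //.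
      by rewrite ltr1n.
    rewrite /dinf_set; case/ereal_inf_lt => _ [w Ew <-]; rewrite lte_fin => hw.
    case: Ew => cw /bigU_mem [a [aS _ /bigI_mem hbox]].
    apply: (mem_NS _ _ a); first by rewrite mem_enum in aS.
    rewrite inE /r; apply: enorm_le; first by apply: addr_ge0 => //; apply: divr_ge0 => //; apply: ltW.
    move=> i; rewrite !mxE.
    have h1 := @dinf_coord R d (val b) w i.
    have h2 := hbox i (mem_enum _ i) isT.
    move: h1 h2; rewrite /= !ler_norml => /andP[? ?] /andP[? ?].
    by apply/andP; split; lra.
  have := le_trans C2 (le_trans C3 (le_trans C4 C5)).
  rewrite lee_fin ler_pM2l ?invr_gt0 ?exprn_gt0 // ler_nat => hS.
  exact: leq_trans hS C6.
have [h [hN hinj]] : exists h : X -> Y, (forall a, h a \in N a) /\ injective h.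
  case: (pselect (exists a : X, True)) => [[a0 _]|nX].
    have : (0 < #|N a0|)%N.
      have := HC [set a0]%SET; by rewrite /NS big_set1 cards1.
    rewrite card_gt0 => /set0Pn [b0 _].
    exact: (hallNS b0 _ HC).
  have f0 : X -> Y by move=> a; exfalso; apply: nX; exists a.
  by exists f0; split => a; exfalso; apply: nX; exists a.
pose g (v : 'rV[R]_d) := if insub v is Some a then val (h a) else v.
have gE x (xX : x \in X) : g x = val (h [` xX]%fset) by rewrite /g insubT.
have gN x (xX : x \in X) : enorm (g x - f x) <= r.
  by rewrite gE; have := hN [` xX]%fset; rewrite inE.
exists g; split; [|split].
- by move=> x xX; rewrite gE; apply: fsvalP.
- move=> x x' xX x'X; rewrite !gE => /val_inj/hinj e.
  by have := congr1 val e.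
set M1 := Num.max 1 L.
set Q := nr * Dm + 1.
have M1a : 1 <= M1 by rewrite le_max lexx.
have M1b : L <= M1 by rewrite le_max lexx orbT.
have Q1 : 1 <= Q by rewrite lerDr mulr_ge0 // ltW.
have c0 : 0 < c by apply: lt_trans c1.
have d0 : 0 <= d%:R :> R by [].
apply: sup_le'.
  apply: mulr_ge0; last by apply: le_trans Q1.
  apply: mulr_ge0; last exact: ltW.
  apply: mulr_ge0; first by rewrite addr_ge0 // mulr_ge0 // addr_ge0 // mulr_ge0.
  by apply: le_trans M1a.
move=> q [[x x'] /= [xX [x'X xx']] <-].
set e := enorm (x - x').
have cn0 : 0 < c * nr by apply: mulr_gt0.
have e0 : (c * nr)^-1 <= e.
  apply: lattice_sep; first by rewrite invr_gt0.
  - by have [] := XP x xX.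
  - by have [] := XP x' x'X.
  - by apply/eqP.
have epos : 0 < e by apply: lt_le_trans e0; rewrite invr_gt0.
have u1 : 1 <= c * nr * e.
  have := ler_wpM2l (ltW cn0) e0; by rewrite divff // gt_eqF.
have key : enorm (g x - g x') <= d%:R * (2 * r + L * e).
  apply: enorm_le; first by apply: addr_ge0; [apply: mulr_ge0|apply: mulr_ge0 => //; apply: ltW].
  move=> i; rewrite !mxE.
  have h1 := le_trans (@coord_le_enorm R d (g x - f x) i) (gN x xX).
  have h2 := le_trans (@coord_le_enorm R d (g x' - f x') i) (gN x' x'X).
  have h3 := le_trans (@coord_le_enorm R d (f x - f x') i) (@lip_le R d _ _ _ _ flip (Xcube x xX) (Xcube x' x'X)).
  move: h1 h2 h3; rewrite !mxE !ler_norml -/L -/e => /andP[? ?] /andP[? ?] /andP[? ?].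
  by apply/andP; split; lra.
rewrite ler_pdivrMr //; apply: le_trans key _.
set W := L * Dm * nr + 2.
have t1 : 2 * r <= 2 * r * (c * nr * e) by apply: ler_peMr => //; apply: mulr_ge0.
have t2 : 2 * r * (c * nr * e) = e * (2 * c * d%:R * W).
  by rewrite /W /r /rho; field; rewrite gt_eqF.
have W2 : W <= 2 * M1 * Q.
  have s1 : L * Dm * nr <= M1 * (Dm * nr).
    by rewrite -mulrA; apply: ler_wpM2r => //; apply: mulr_ge0 => //; apply: ltW.
  have s0 : 0 <= M1 * (Dm * nr) by apply: mulr_ge0; [apply: le_trans M1a|apply: mulr_ge0 => //; apply: ltW].
  rewrite /W /Q; have -> : 2 * M1 * (nr * Dm + 1) = 2 * (M1 * (Dm * nr)) + 2 * M1 by ring.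
  lra.
have LP : L <= M1 * c * Q.
  apply: le_trans M1b _; rewrite -mulrA; apply: ler_peMr; first by apply: le_trans M1a.
  by rewrite -[1]mulr1; apply: ler_pM => //; apply: ltW.
have G : d%:R * (2 * c * d%:R * W + L) <= (d%:R * (4 * d%:R + 1) + 1) * M1 * c * Q.
  have g1 : 2 * c * d%:R * W <= 2 * c * d%:R * (2 * M1 * Q).
    by apply: ler_wpM2l => //; apply: mulr_ge0 => //; apply: mulr_ge0 => //; apply: ltW.
  have P0 : 0 <= M1 * c * Q.
    apply: mulr_ge0; last by apply: le_trans Q1.
    by apply: mulr_ge0; [apply: le_trans M1a|apply: ltW].
  have g2 : d%:R * (2 * c * d%:R * W + L) <= d%:R * (2 * c * d%:R * (2 * M1 * Q) + M1 * c * Q).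
    by apply: ler_wpM2l => //; apply: lerD.
  apply: le_trans g2 _.
  have -> : d%:R * (2 * c * d%:R * (2 * M1 * Q) + M1 * c * Q) = (d%:R * (4 * d%:R + 1)) * (M1 * c * Q) by ring.
  have -> : (d%:R * (4 * d%:R + 1) + 1) * M1 * c * Q = (d%:R * (4 * d%:R + 1) + 1) * (M1 * c * Q) by ring.
  by apply: ler_wpM2r => //; rewrite lerDl.
apply: (@le_trans _ _ (d%:R * (e * (2 * c * d%:R * W) + L * e))).
  by apply: ler_wpM2l => //; rewrite lerD2r -t2.
have -> : d%:R * (e * (2 * c * d%:R * W) + L * e) = (d%:R * (2 * c * d%:R * W + L)) * e by ring.
by apply: ler_wpM2r => //; apply: ltW.
Qed.
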